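(* Let $k\geq1$ and let $c_0,\dots,c_{k-1}$ be non-negative integers with $c_0\geq1$. Let $P(z)=z^k-\sum_{i=0}^{k-1}c_iz^i$, let $\eta_1,\dots,\eta_k$ be its complex roots listed with multiplicity, let $\varphi$ be its unique positive real root, let $g=\gcd(\{i:c_i\neq0\}\cup\{k\})$, and (when $k>g$) let $\psi$ be a root of largest absolute value among the roots with $|\eta|<\varphi$. Then for every positive integer $N$: (i) if $g\nmid N$, then $|\eta_1^N+\dots+\eta_k^N|\leq (k-g)|\psi|^N$; (ii) if $g\mid N$, then $|g\varphi^N-(\eta_1^N+\dots+\eta_k^N)|\leq (k-g)|\psi|^N$. (When $k=g$ the right-hand sides are to be read as $0$.) *)

(* Defs.v *)
From HB Require Import structures.
From mathcomp Require Import all_boot all_order all_algebra all_field.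
Set Implicit Arguments. Unset Strict Implicit. Unset Printing Implicit Defensive.
Import Order.TTheory GRing.Theory Num.Theory.
Local Open Scope ring_scope.

Definition charpoly_c (k : nat) (c : nat -> nat) : {poly algC} :=
  'X^k - \sum_(i < k) (c i)%:R *: 'X^i.

Definition gcd_supp (k : nat) (c : nat -> nat) : nat :=
  \big[gcdn/k]_(i < k | c i != 0%N) (i : nat).

Definition power_sum (rs : seq algC) (N : nat) : algC :=
  \sum_(r <- rs) r ^+ N.

(* Main.v *)
Require Import Defs.
From HB Require Import structures.
From mathcomp Require Import all_boot all_order all_algebra all_field.
Import Order.TTheory GRing.Theory Num.Theory.
Local Open Scope ring_scope.

Lemma hornerP k (c : nat -> nat) (x : algC) :
  (charpoly_c k c).[x] = x ^+ k - \sum_(i < k) (c i)%:R * x ^+ i.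
Proof.
rewrite /charpoly_c hornerD hornerN hornerXn horner_sum; congr (_ - _).
by apply: eq_bigr => i _; rewrite hornerZ hornerXn.
Qed.

Lemma rootP' k (c : nat -> nat) (x : algC) : root (charpoly_c k c) x ->
  x ^+ k = \sum_(i < k) (c i)%:R * x ^+ i.
Proof. by rewrite /root hornerP subr_eq0 => /eqP. Qed.

Lemma root_of k (c : nat -> nat) (x : algC) : x ^+ k = \sum_(i < k) (c i)%:R * x ^+ i ->
  root (charpoly_c k c) x.
Proof. by move=> h; rewrite /root hornerP h subrr. Qed.

Lemma exp_gcd (u : algC) a b : u ^+ a = 1 -> u ^+ b = 1 -> u ^+ (gcdn a b) = 1.
Proof.
move=> ha hb; case: (posnP a) => [->|a0]; first by rewrite gcd0n.
case: (egcdnP b a0) => km kn E _.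
have : u ^+ (km * a) = 1 by rewrite mulnC exprM ha expr1n.
by rewrite E exprD mulnC exprM hb expr1n mul1r.
Qed.

Lemma gcd_dvd_k k (c : nat -> nat) : (gcd_supp k c %| k)%N.
Proof.
rewrite /gcd_supp; apply: (big_rec (fun x => x %| k)%N) => // i x _ hx.
exact: dvdn_trans (dvdn_gcdr _ _) hx.
Qed.

Lemma gcd_dvd_i k (c : nat -> nat) (i : 'I_k) : c i != 0%N -> (gcd_supp k c %| i)%N.
Proof. by move=> hi; rewrite /gcd_supp (bigD1 i) //= dvdn_gcdl. Qed.

Lemma gcd_pos k (c : nat -> nat) : (0 < k)%N -> (0 < gcd_supp k c)%N.
Proof.
move=> hk; have := gcd_dvd_k k c; case: (gcd_supp k c) => //.
by rewrite dvd0n => /eqP hk0; rewrite hk0 in hk.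
Qed.

Lemma exp_g k (c : nat -> nat) (u : algC) : u ^+ k = 1 -> (forall i : 'I_k, c i != 0%N -> u ^+ i = 1) ->
  u ^+ gcd_supp k c = 1.
Proof.
move=> hk hi; rewrite /gcd_supp.
apply: (big_rec (fun x => u ^+ x = 1)) => // i x ci hx.
exact: exp_gcd (hi i ci) hx.
Qed.

Lemma g_exp k (c : nat -> nat) (u : algC) : u ^+ gcd_supp k c = 1 ->
  u ^+ k = 1 /\ (forall i : 'I_k, c i != 0%N -> u ^+ i = 1).
Proof.
move=> hu; split.
  by case/dvdnP: (gcd_dvd_k k c) => m ->; rewrite mulnC exprM hu expr1n.
by move=> i ci; case/dvdnP: (@gcd_dvd_i k c i ci) => m ->; rewrite mulnC exprM hu expr1n.
Qed.
Lemma norm_bound k (c : nat -> nat) (phi eta : algC) : (0 < k)%N -> (0 < c 0%N)%N ->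
  0 < phi -> root (charpoly_c k c) phi -> root (charpoly_c k c) eta ->
  `|eta| <= phi /\ (`|eta| = phi -> (eta / phi) ^+ k = 1 /\
     forall i : 'I_k, c i != 0%N -> (eta / phi) ^+ i = 1).
Proof.
move=> hk hc0 hphi /rootP' Hphi /rootP' He.
pose r : algC := `|eta|.
have r0 : 0 <= r by rewrite normr_ge0.
have phi0 : phi != 0 by rewrite gt_eqF.
have nF : forall i, `|(c i)%:R * eta ^+ i| = (c i)%:R * r ^+ i.
  by move=> i; rewrite normrM normr_nat normrX.
have tri : r ^+ k <= \sum_(i < k) (c i)%:R * r ^+ i.
  rewrite -normrX He; apply: le_trans (ler_norm_sum _ _ _) _.
  by rewrite le_eqVlt; apply/orP; left; apply/eqP; apply: eq_bigr => i _.
pose i0 : 'I_k := Ordinal hk.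
case: (boolP (r <= phi)) => [hle|]; last first.
  rewrite -real_ltNge ?(ger0_real r0) ?(gtr0_real hphi) // => hlt.
  exfalso.
  set s := r / phi.
  have rs : r = phi * s by rewrite /s mulrC divfK.
  have s1 : 1 < s by rewrite /s ltr_pdivlMr // mul1r.
  have s0 : 0 <= s by apply: ltW; apply: lt_trans s1.
  have sk1 : 1 < s ^+ k by rewrite -(expr1n _ k) ltrXn2r // ?gtn_eqF // ?nnegrE.
  suff h : \sum_(i < k) (c i)%:R * r ^+ i < r ^+ k by have := lt_le_trans h tri; rewrite ltxx.
  have -> : r ^+ k = \sum_(i < k) (c i)%:R * phi ^+ i * s ^+ k.
    by rewrite -mulr_suml -Hphi rs exprMn.
  rewrite (bigD1 i0) //= [X in _ < X](bigD1 i0) //=.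
  apply: ltr_leD.
    rewrite /= !expr0 !mulr1 -[X in X < _]mulr1.
    by rewrite ltr_pM2l // ltr0n.
  apply: ler_sum => i _; rewrite rs exprMn mulrA; apply: ler_wpM2l.
    by rewrite mulr_ge0 ?ler0n // exprn_ge0 // ltW.
  by apply: ler_weXn2l; [apply: ltW | apply: ltnW].
split => // req.
have eqsum : `|\sum_(i < k) (c i)%:R * eta ^+ i| = \sum_(i < k) `|(c i)%:R * eta ^+ i|.
  rewrite -He normrX req Hphi; apply: eq_bigr => i _; by rewrite nF /r req.
case: (normC_sum_eq eqsum) => t /eqP t1 ht.
have ht' : forall i : 'I_k, (c i)%:R * eta ^+ i = (c i)%:R * phi ^+ i * t.
  by move=> i; rewrite ht // nF /r req.
have t_one : t = 1.
  have := ht' i0; rewrite /= !expr0 !mulr1 => /esym/eqP.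
  rewrite -subr_eq0 -{2}(mulr1 (c 0%N)%:R) -mulrBr mulf_eq0 pnatr_eq0 eqn0Ngt hc0 /=.
  by rewrite subr_eq0 => /eqP.
have ek : eta ^+ k = phi ^+ k.
  by rewrite He Hphi; apply: eq_bigr => i _; rewrite ht' t_one mulr1.
split; first by rewrite expr_div_n ek divff // expf_neq0.
move=> i ci; rewrite expr_div_n.
have cn : (c i)%:R != 0 :> algC by rewrite pnatr_eq0.
have : (c i)%:R * eta ^+ i = (c i)%:R * phi ^+ i by rewrite ht' t_one mulr1.
by move/(mulfI cn) ->; rewrite divff // expf_neq0.
Qed.
Lemma aux_der (a : algC) n : a * (a ^+ n.-1 *+ n) = n%:R * a ^+ n.
Proof. by case: n => [|n]; rewrite ?mulr0n ?mulr0 ?mul0r // mulrnAr -exprS mulr_natl. Qed.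

Lemma deriv_eval k (c : nat -> nat) (a : algC) :
  a * (charpoly_c k c)^`().[a] =
  k%:R * a ^+ k - \sum_(i < k) (c i)%:R * (i%:R * a ^+ i).
Proof.
rewrite /charpoly_c derivB derivXn raddf_sum hornerD hornerN hornerMn hornerXn.
rewrite horner_sum mulrBr mulr_sumr aux_der; congr (_ - _).
apply: eq_bigr => i _.
by rewrite /= derivZ derivXn hornerZ hornerMn hornerXn mulrCA aux_der.
Qed.

Lemma mult_deriv (rs : seq algC) a : (1 < count_mem a rs)%N ->
  (\prod_(r <- rs) ('X - r%:P))^`().[a] = 0.
Proof.
move=> h.
have ars : a \in rs by rewrite -has_pred1 has_count; apply: ltnW.
have p1 := perm_to_rem ars.
have ar : a \in rem a rs.
  move/permP: p1 => /(_ (pred1 a)) /=; rewrite eqxx add1n => E.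
  by rewrite -has_pred1 has_count -ltnS -E.
pose R := \prod_(j <- rem a (rem a rs)) ('X - j%:P).
have -> : \prod_(r <- rs) ('X - r%:P) = ('X - a%:P) * (('X - a%:P) * R).
  by rewrite (perm_big _ p1) big_cons (perm_big _ (perm_to_rem ar)) big_cons.
by rewrite !derivM !hornerE subrr /= !(mulr0, mul0r, add0r, addr0).
Qed.

From mathcomp Require Import ring.

Lemma deriv_ne0 k (c : nat -> nat) (phi u : algC) : (0 < k)%N -> (0 < c 0%N)%N ->
  0 < phi -> root (charpoly_c k c) phi -> u ^+ gcd_supp k c = 1 ->
  (charpoly_c k c)^`().[phi * u] != 0.
Proof.
move=> hk hc0 hphi /rootP' Hphi hu.
case: (@g_exp k c u hu) => uk ui.
apply/negP => /eqP h0.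
have := deriv_eval k c (phi * u); rewrite h0 mulr0.
have -> : (phi * u) ^+ k = phi ^+ k by rewrite exprMn uk mulr1.
have -> : \sum_(i < k) (c i)%:R * (i%:R * (phi * u) ^+ i) =
          \sum_(i < k) (c i)%:R * (i%:R * phi ^+ i).
  apply: eq_bigr => i _; case: (eqVneq (c i) 0%N) => [->|ci]; first by rewrite !mul0r.
  by rewrite exprMn ui // mulr1.
rewrite Hphi mulr_sumr -sumrB.
suff hpos : 0 < \sum_(i < k) (k%:R * ((c i)%:R * phi ^+ i) - (c i)%:R * (i%:R * phi ^+ i)) by move=> E; rewrite -E ltxx in hpos.
pose i0 : 'I_k := Ordinal hk.
rewrite (bigD1 i0) //=; apply: ltr_wpDr.
  apply: sumr_ge0 => i _.
  have -> : k%:R * ((c i)%:R * phi ^+ i) - (c i)%:R * (i%:R * phi ^+ i) =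
            (c i)%:R * phi ^+ i * (k%:R - i%:R) by ring.
  apply: mulr_ge0; last by rewrite subr_ge0 ler_nat ltnW.
  by apply: mulr_ge0; [exact: ler0n | exact: exprn_ge0 (ltW hphi)].
rewrite /= (_ : _ - _ = k%:R * (c 0%N)%:R); last by rewrite expr0; ring.
by rewrite mulr_gt0 // ltr0n.
Qed.

Lemma root_rot k (c : nat -> nat) (phi u : algC) : root (charpoly_c k c) phi ->
  u ^+ gcd_supp k c = 1 -> root (charpoly_c k c) (phi * u).
Proof.
move=> /rootP' Hphi hu; case: (@g_exp k c u hu) => uk ui.
apply: root_of; rewrite exprMn uk mulr1 Hphi; apply: eq_bigr => i _.
case: (eqVneq (c i) 0%N) => [->|ci]; first by rewrite !mul0r.
by rewrite exprMn ui // mulr1.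
Qed.

Lemma sum_const_count (s : seq algC) (P : pred algC) (x : algC) :
  \sum_(r <- s | P r) x = x *+ count P s.
Proof.
elim: s => [|y s IH]; first by rewrite big_nil.
by rewrite big_cons /=; case: (P y); rewrite IH ?add1n ?mulrS.
Qed.

Lemma size_charpoly k (c : nat -> nat) : size (charpoly_c k c) = k.+1.
Proof.
rewrite /charpoly_c size_polyDl ?size_polyXn // size_polyN ltnS.
apply: (big_rec (fun p : {poly algC} => size p <= k)%N); first by rewrite size_poly0.
move=> i p _ hp; apply: leq_trans (size_polyD _ _) _; rewrite geq_max hp andbT.
by apply: leq_trans (size_scale_leq _ _) _; rewrite size_polyXn.
Qed.

Theorem mainTheorem12 (k : nat) (c : nat -> nat) (rs : seq algC) (phi : algC)
  (hk : (1 <= k)%N) (hc0 : (1 <= c 0%N)%N)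
  (hrs : charpoly_c k c = \prod_(r <- rs) ('X - r%:P))
  (hphi_pos : 0 < phi) (hphi_root : root (charpoly_c k c) phi) :
  let g := gcd_supp k c in
  (* case k = g: right-hand sides read as 0 *)
  ((k = g) -> forall N : nat, (0 < N)%N ->
     (~~ (g %| N)%N -> power_sum rs N = 0) /\
     ((g %| N)%N -> g%:R * phi ^+ N - power_sum rs N = 0)) /\
  (* case k > g: psi a root of largest modulus among roots with |eta| < phi *)
  (forall psi : algC, psi \in rs -> `|psi| < phi ->
     (forall eta, eta \in rs -> `|eta| < phi -> `|eta| <= `|psi|) ->
     forall N : nat, (0 < N)%N ->
       (~~ (g %| N)%N -> `|power_sum rs N| <= (k - g)%:R * `|psi| ^+ N) /\
       ((g %| N)%N -> `|g%:R * phi ^+ N - power_sum rs N| <= (k - g)%:R * `|psi| ^+ N)).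
Proof.
move=> g.
have hg0 : (0 < g)%N := @gcd_pos k c hk.
have memR : forall x, (x \in rs) = root (charpoly_c k c) x.
  by move=> x; rewrite hrs root_prod_XsubC.
have szrs : size rs = k.
  have := size_prod_XsubC rs (fun r => r); rewrite /= -hrs size_charpoly.
  by case.
case: (C_prim_root_exists hg0) => z zp.
have zg : z ^+ g = 1 := prim_expr_order zp.
have nz : `|z| = 1.
  by apply/eqP; rewrite -(pexpr_eq1 hg0 (normr_ge0 z)) -normrX zg normr1.
have phi0 : phi != 0 by rewrite gt_eqF.
have nphi : `|phi| = phi := gtr0_norm hphi_pos.
pose a := fun r : algC => `|r| == phi.
pose L := [seq phi * z ^+ j | j <- index_iota 0 g].
have uL : uniq L.
  rewrite map_inj_in_uniq ?/index_iota ?subn0 ?iota_uniq // => i j.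
  rewrite !mem_iota !add0n => /andP[_ hi] /andP[_ hj] /(mulfI phi0)/eqP.
  by rewrite (eq_prim_root_expr zp) !modn_small // => /eqP.
have rootL : forall x, x \in L -> root (charpoly_c k c) x /\ `|x| = phi.
  move=> x /mapP[j _ ->]; split.
    by apply: root_rot => //; rewrite exprAC zg expr1n.
  by rewrite normrM nphi normrX nz expr1n mulr1.
have K : forall x, count_mem x (filter a rs) = (x \in L).
  move=> x; rewrite count_filter.
  case: (boolP (a x)) => ax.
    rewrite (@eq_count _ _ (pred1 x)); last first.
      by move=> y /=; case: (eqVneq y x) => // ->; rewrite ax.
    case: (boolP (x \in rs)) => xr.
      have rx : root (charpoly_c k c) x by rewrite -memR.
      have [_ hb] := @norm_bound k c phi x hk hc0 hphi_pos hphi_root rx.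
      have [uk ui] := hb (eqP ax).
      have ug := @exp_g k c _ uk ui.
      have xe : x = phi * (x / phi) by rewrite mulrC divfK.
      have xL : x \in L.
        case: (prim_rootP zp ug) => j hj; apply/mapP; exists (val j).
          by rewrite mem_index_iota ltn_ord.
        by rewrite -hj.
      rewrite xL; apply/eqP; rewrite eqn_leq -has_count has_pred1 xr andbT leqNgt.
      apply/negP => h2.
      have := @mult_deriv rs x h2; rewrite -hrs => /eqP; apply/negP.
      by rewrite {1}xe; apply: deriv_ne0.
    have xL : x \notin L.
      by apply/negP => /rootL[rx _]; move: xr; rewrite memR rx.
    by rewrite (count_memPn xr) (negbTE xL).
  rewrite (@eq_count _ _ pred0) ?count_pred0; last first.
    by move=> y /=; case: (eqVneq y x) => // ->; rewrite (negbTE ax).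
  have xL : x \notin L.
    by apply/negP => /rootL[_ nx]; rewrite /a nx eqxx in ax.
  by rewrite (negbTE xL).
have memBL : filter a rs =i L.
  by move=> x; rewrite -has_pred1 has_count K; case: (x \in L).
have uB : uniq (filter a rs) by apply: count_mem_uniq => x; rewrite K memBL.
have pBL : perm_eq (filter a rs) L := uniq_perm uB uL memBL.
have cnt : count (fun r => ~~ a r) rs = (k - g)%N.
  have := count_predC a rs; rewrite szrs -size_filter (perm_size pBL).
  rewrite /L size_map /index_iota size_iota subn0 => <-.
  by rewrite addKn.
have ltA : forall r, r \in rs -> ~~ a r -> `|r| < phi.
  move=> r rr ar; have rr' : root (charpoly_c k c) r by rewrite -memR.
  have [h _] := @norm_bound k c phi r hk hc0 hphi_pos hphi_root rr'.
  by rewrite lt_neqAle ar h.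
have splt : forall N, power_sum rs N =
    phi ^+ N * (\sum_(j < g) (z ^+ N) ^+ j) + \sum_(r <- rs | ~~ a r) r ^+ N.
  move=> N; rewrite /power_sum (bigID a) /=; congr (_ + _).
  rewrite -big_filter (perm_big _ pBL) big_map big_mkord mulr_sumr.
  by apply: eq_bigr => j _; rewrite exprMn exprAC.
have geo : forall N, \sum_(j < g) (z ^+ N) ^+ j = if (g %| N)%N then g%:R else 0.
  move=> N; case: ifP => hN.
    case/dvdnP: hN => m ->; rewrite mulnC exprM zg expr1n.
    by rewrite (eq_bigr (fun=> 1)) ?sumr_const ?card_ord // => j _; rewrite expr1n.
  have zN : z ^+ N != 1.
    by rewrite -(expr0 z) (eq_prim_root_expr zp) mod0n; move: hN; rewrite /dvdn => ->.
  have := subrX1 (z ^+ N) g; rewrite exprAC zg expr1n subrr => /esym/eqP.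
  by rewrite mulf_eq0 subr_eq0 (negbTE zN) /= => /eqP.
have SAbound : forall (N : nat) (psi : algC), (forall r, r \in rs -> ~~ a r -> `|r| <= `|psi|) ->
    `|\sum_(r <- rs | ~~ a r) r ^+ N| <= (k - g)%:R * `|psi| ^+ N.
  move=> N psi hpsi; apply: (le_trans (ler_norm_sum _ _ _)).
  apply: (@le_trans _ _ (\sum_(r <- rs | ~~ a r) `|psi| ^+ N)).
    rewrite big_seq_cond [X in _ <= X]big_seq_cond; apply: ler_sum => r /andP[rr ar].
    by rewrite normrX lerXn2r ?nnegrE // hpsi.
  by rewrite sum_const_count cnt mulr_natl.
have SA0 : k = g -> forall N, \sum_(r <- rs | ~~ a r) r ^+ N = 0.
  move=> kg N; rewrite -big_filter.
  have -> : [seq r <- rs | ~~ a r] = [::].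
    by apply: size0nil; rewrite size_filter cnt kg subnn.
  by rewrite big_nil.
split.
  move=> kg N _; split => hN.
    by rewrite splt geo (negbTE hN) mulr0 add0r SA0.
  by rewrite splt geo hN SA0 // addr0 mulrC subrr.
move=> psi _ _ hpsi N _.
have hb : forall r, r \in rs -> ~~ a r -> `|r| <= `|psi|.
  by move=> r rr ar; apply: hpsi rr (ltA r rr ar).
split => hN.
  by rewrite splt geo (negbTE hN) mulr0 add0r; apply: SAbound.
rewrite splt geo hN [X in X - _]mulrC opprD addrA subrr add0r normrN.
exact: SAbound.
Qed.
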